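(* Let $\Sigma$ be a finite alphabet, let $y^* = y^*_1 \cdots y^*_n \in \Sigma^*$, let $p \in \Sigma^*$, and let $m(p) = \min_{0 \le j \le n} D(p, y^*_{1..j})$. For a symbol $a \in \Sigma$ define the optimal Q-value $$Q^*(p, a) \;=\; \max_{s \in \Sigma^*} \bigl(-D(p\,a\,s,\; y^* )\bigr).$$ Then $$Q^*(p,a) \;=\; \begin{cases} -m(p) & \text{if there exists } j \in \{0,\dots,n-1\} \text{ with } D(p, y^*_{1..j}) = m(p) \text{ and } y^*_{j+1} = a,\\[2pt] -m(p) - 1 & \text{otherwise.}\end{cases}$$ Furthermore, terminating immediately (i.e. choosing the empty suffix, giving value $-D(p,y^* )$) attains the value $-m(p)$ if and only if $D(p, y^* ) = m(p)$, and otherwise has value at most $-m(p)-1$.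
   Context: $D(u,v)$ denotes the Levenshtein edit distance between finite strings $u,v$: the minimum number of single-symbol insertions, deletions and substitutions needed to transform $u$ into $v$. For a string $y^*$ of length $n$, $y^*_{1..j}$ denotes its prefix of length $j$ ($y^*_{1..0}$ is the empty string). Juxtaposition $p\,a\,s$ denotes concatenation of the string $p$, the single symbol $a$, and the string $s$. *)

(* Defs.v *)
From mathcomp Require Import all_boot all_order all_algebra.
Set Implicit Arguments. Unset Strict Implicit. Unset Printing Implicit Defensive.
Import GRing.Theory Num.Theory.

(* Levenshtein edit distance, by the standard recursion:
   D([], t) = |t|, D(s, []) = |s|,
   D(a::s, b::t) = min(D(s, b::t)+1, D(a::s, t)+1, D(s,t) + [a<>b]). *)
Fixpoint lev (T : eqType) (s t : seq T) {struct s} : nat :=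
  match s with
  | [::] => size t
  | a :: s' =>
      let fix aux (t : seq T) : nat :=
        match t with
        | [::] => size s
        | b :: t' => minn (minn (lev s' t).+1 (aux t').+1) (lev s' t' + (a != b))
        end in aux t
  end.

Definition mpref (T : eqType) (p y : seq T) : nat :=
  \big[minn/lev p [::]]_(j < (size y).+1) lev p (take j y).

Definition is_max_of (S : Type) (f : S -> int) (v : int) : Prop :=
  (exists s, f s = v) /\ (forall s, (f s <= v)%R).

Definition Qstar_is (T : eqType) (p : seq T) (a : T) (y : seq T) (v : int) : Prop :=
  is_max_of (fun s : seq T => (- (lev (p ++ a :: s) y)%:Z)%R) v.

(* Main.v *)
Require Import Defs.
From mathcomp Require Import all_boot all_order all_algebra.
From mathcomp Require Import zify.
Import GRing.Theory Num.Theory.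
Set Implicit Arguments. Unset Strict Implicit.

Lemma lev_cons (T:eqType) (c b:T) s t : lev (c::s) (b::t) = minn (minn (lev s (b::t)).+1 (lev (c::s) t).+1) (lev s t + (c != b)).
Proof. by []. Qed.
Lemma lev_r0 (T:eqType) (s:seq T) : lev s [::] = size s.
Proof. by case: s. Qed.
Lemma lev_l0 (T:eqType) (t:seq T) : lev [::] t = size t.
Proof. by []. Qed.

Lemma lev_ins (T:eqType) (b:T) s t : lev s (b::t) <= (lev s t).+1.
Proof. case: s => [|c s]; first by rewrite !lev_l0. rewrite lev_cons; lia. Qed.
Lemma lev_del (T:eqType) (c:T) s t : lev (c::s) t <= (lev s t).+1.
Proof. case: t => [|b t]; first by rewrite !lev_r0. rewrite lev_cons; lia. Qed.
Lemma lev_refl (T:eqType) (s:seq T) : lev s s = 0.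
Proof. elim: s => [|c s IH] //; rewrite lev_cons IH eqxx; lia. Qed.

Lemma lev_pre (T:eqType) (t s:seq T) j : lev s t <= j + lev s (drop j t).
Proof.
elim: t j => [|b t IH] [|j]; rewrite ?drop0 ?leqnn //.
  by rewrite /=; lia.
by move: (lev_ins b s t) (IH j) => /=; lia.
Qed.

Lemma split_le (T:eqType) (u s y:seq T) j : j <= size y ->
  lev (u ++ s) y <= lev u (take j y) + lev s (drop j y).
Proof.
elim: u y j => [|c u IHu] y j.
  by move=> Hj; rewrite lev_l0 size_takel //; exact: lev_pre.
elim: y j => [|b y IHy] [|j] Hj //.
- by rewrite take0 drop0 !lev_r0 /= size_cat.
- rewrite take0 drop0 cat_cons lev_cons lev_r0.
  by move: (IHu (b::y) 0 isT); rewrite take0 drop0 lev_r0 /=; lia.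
- rewrite cat_cons lev_cons [take _ (b::y)]/= [drop _ (b::y)]/= lev_cons.
  move: (IHu (b::y) j.+1 Hj) (IHy j Hj) (IHu y j Hj); rewrite cat_cons [take _ (b::y)]/= [drop _ (b::y)]/=. lia.
Qed.

Lemma split_ex (T:eqType) (u s y:seq T) : exists2 j, j <= size y &
  lev u (take j y) + lev s (drop j y) <= lev (u ++ s) y.
Proof.
elim: u y => [|c u IHu] y.
  by exists 0 => //; rewrite take0 drop0.
elim: y => [|b y [k Hk IHy]].
  by exists 0 => //=; rewrite !lev_r0 /= size_cat.
rewrite cat_cons in IHy. rewrite cat_cons lev_cons.
have [j1 Hj1 H1] := IHu (b::y).
have [j3 Hj3 H3] := IHu y.
set A := lev (u ++ s) (b :: y). set B := lev (c :: u ++ s) y. set C := lev (u ++ s) y + (c != b).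
have : minn (minn A.+1 B.+1) C = A.+1 \/ minn (minn A.+1 B.+1) C = B.+1 \/ minn (minn A.+1 B.+1) C = C by lia.
case=> [->|[->|->]].
- move: Hj1 H1; case: j1 => [|j1] Hj1 H1.
  + exists 0 => //; move: H1; rewrite !take0 !drop0 !lev_r0 /=; lia.
  + exists j1.+1 => //; move: H1; rewrite [take _ (b::y)]/= [drop _ (b::y)]/= lev_cons; lia.
- exists k.+1 => //; move: IHy; rewrite [take _ (b::y)]/= [drop _ (b::y)]/= lev_cons; lia.
- exists j3.+1 => //; move: H3; rewrite [take _ (b::y)]/= [drop _ (b::y)]/= lev_cons /C; lia.
Qed.

Lemma bigseq_le (I:eqType) x (r : seq I) (F : I -> nat) i : i \in r -> \big[minn/x]_(j <- r) F j <= F i.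
Proof.
elim: r => [|k r IH] //; rewrite big_cons in_cons => /orP[/eqP->|Hi].
  exact: geq_minl.
exact: leq_trans (geq_minr _ _) (IH Hi).
Qed.

Lemma bigseq_ex (I:eqType) x (r : seq I) (F : I -> nat) :
  \big[minn/x]_(j <- r) F j = x \/ exists2 i, i \in r & \big[minn/x]_(j <- r) F j = F i.
Proof.
elim: r => [|k r IH]; first by left; rewrite big_nil.
rewrite big_cons.
case: (leqP (F k) (\big[minn/x]_(j <- r) F j)) => H.
  by right; exists k; rewrite ?mem_head.
case: IH => [->|[i Hi ->]]; first by left.
by right; exists i => //; rewrite in_cons Hi orbT.
Qed.

Lemma bigminn_le x n (F : nat -> nat) i : i < n -> \big[minn/x]_(j < n) F j <= F i.
Proof.
move=> Hi; have := @bigseq_le _ x (index_enum 'I_n) (fun j : 'I_n => F j) _ (mem_index_enum (Ordinal Hi)); by [].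
Qed.

Lemma bigminn_ex x n (F : nat -> nat) :
  \big[minn/x]_(j < n) F j = x \/ exists2 i, i < n & \big[minn/x]_(j < n) F j = F i.
Proof.
case: (bigseq_ex x (index_enum 'I_n) (fun j : 'I_n => F j)) => [->|[i _ ->]]; first by left.
by right; exists i.
Qed.

Lemma mpref_le (T:eqType) (p y : seq T) j : mpref p y <= lev p (take j y).
Proof.
rewrite /mpref; case: (leqP j (size y)) => H.
  by have := @bigminn_le (lev p [::]) (size y).+1 (fun j => lev p (take j y)) j; apply.
rewrite take_oversize ?(ltnW H) //.
by move: (@bigminn_le (lev p [::]) _ (fun j => lev p (take j y)) _ (ltnSn (size y))); rewrite take_size.
Qed.

Lemma mpref_ex (T:eqType) (p y : seq T) : exists2 j, j <= size y & lev p (take j y) = mpref p y.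
Proof.
rewrite /mpref; case: (@bigminn_ex (lev p [::]) (size y).+1 (fun j => lev p (take j y))) => [->|[i Hi ->]].
  by exists 0; rewrite ?take0.
by exists i.
Qed.

Section Main.
Variables (T : eqType) (y p : seq T) (a : T).
Definition good := exists j : nat, [/\ (j < size y)%N, lev p (take j y) = mpref p y & nth a y j = a].

Lemma low_all s : mpref p y <= lev (p ++ a :: s) y.
Proof.
have [j Hj H] := split_ex p (a :: s) y.
by move: (mpref_le p y j) H; lia.
Qed.

Lemma low_bad s : ~ good -> (mpref p y).+1 <= lev (p ++ a :: s) y.
Proof.
move=> Hg; have [j Hj H] := split_ex p (a :: s) y.
move: (mpref_le p y j) => Hm.
case: (ltnP (mpref p y) (lev p (take j y))) => Hl; first by lia.
have Heq : lev p (take j y) = mpref p y by lia.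
rewrite leq_eqVlt in Hj; case/orP: Hj => [/eqP Hj|Hj].
  by move: H Heq; rewrite Hj drop_size lev_r0 /=; lia.
move: H; rewrite (drop_nth a Hj) lev_cons.
have -> : (a != nth a y j) = true by apply/eqP => E; apply: Hg; exists j; split.
lia.
Qed.

Lemma up_good : good -> exists s, lev (p ++ a :: s) y = mpref p y.
Proof.
case=> j [Hj H1 H2]; exists (drop j.+1 y).
have := split_le p (a :: drop j.+1 y) (ltnW Hj).
rewrite -{2}H2 -drop_nth // lev_refl H1 => H.
by move: (low_all (drop j.+1 y)); lia.
Qed.

Lemma up_all : exists s, lev (p ++ a :: s) y <= (mpref p y).+1.
Proof.
have [j Hj H1] := mpref_ex p y; exists (drop j y).
have := split_le p (a :: drop j y) Hj.
move: (lev_del a (drop j y) (drop j y)); rewrite lev_refl H1; lia.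
Qed.
End Main.

Local Open Scope ring_scope.
Lemma intt (x m : nat) : (- x%:Z = - m%:Z) <-> x = m.
Proof. lia. Qed.
Lemma intt2 (x m : nat) : (- x%:Z <= - m%:Z) <-> (m <= x)%N.
Proof. lia. Qed.
Lemma intt3 (x m : nat) : (- x%:Z = - m%:Z - 1) <-> x = m.+1.
Proof. lia. Qed.
Lemma intt4 (x m : nat) : (- x%:Z <= - m%:Z - 1) <-> (m < x)%N.
Proof. lia. Qed.

Unset Implicit Arguments. Set Strict Implicit.
Theorem mainTheorem3 (Sigma : finType) (y p : seq Sigma) (a : Sigma) :
  ((exists j : nat, [/\ (j < size y)%N,
                        lev p (take j y) = mpref p y
                      & nth a y j = a]) ->
     Qstar_is p a y (- (mpref p y)%:Z))
  /\ (~ (exists j : nat, [/\ (j < size y)%N,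
                             lev p (take j y) = mpref p y
                           & nth a y j = a]) ->
     Qstar_is p a y (- (mpref p y)%:Z - 1))
  /\ ((- (lev p y)%:Z = - (mpref p y)%:Z) <-> lev p y = mpref p y)
  /\ (lev p y <> mpref p y -> - (lev p y)%:Z <= - (mpref p y)%:Z - 1).
Proof.
have Hm : (mpref p y <= lev p y)%N by move: (mpref_le p y (size y)); rewrite take_size.
split; [|split; [|split]].
- move=> Hg; split.
    by have [s Hs] := up_good Hg; exists s; apply/intt.
  by move=> s; apply/intt2; apply: low_all.
- move=> Hg; split.
    have [s Hs] := up_all y p a; exists s; apply/intt3.
    by move: (low_bad s Hg); lia.
  by move=> s; apply/intt4; apply: low_bad.
- exact: intt.
- by move=> H; apply/intt4; lia.
Qed.
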